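(* Let $M$ be a unicyclic partial multiplication matrix, let $\pi^\#$ be a gridded $M$-coil with points $v_1,\dots,v_n$ and let $\sigma^\#$ be a gridded $M$-coil with points $u_1,\dots,u_m$ (each ordered as in the definition of a coil), where $m<n$. Let $L=\{\bullet,\circ\}$ be a two-element antichain, and label $\pi^\#$ by $\ell(v_i)=\bullet$ for $1<i<n$ and $\ell(v_1)=\ell(v_n)=\circ$, and $\sigma^\#$ by $\ell(u_i)=\bullet$ for $1<i<m$ and $\ell(u_1)=\ell(u_m)=\circ$. Then there is no labelled embedding of the labelled gridded permutation $\sigma^\#$ into the labelled gridded permutation $\pi^\#$.
   Context: A gridding matrix has entries in $\{0,1,-1\}$; an $m\times n$ one has $m$ columns, $n$ rows, $M_{ij}$ in column $i$ from the left and row $j$ from the bottom. An $M$-gridding of a permutation $\pi$ of length $L$ is a choice of vertical lines $\tfrac12=v_0\le\dots\le v_m=L+\tfrac12$ and horizontal lines $\tfrac12=h_0\le\dots\le h_n=L+\tfrac12$, not through points of $\pi$, such that in each cell $C_{ij}=\{v_{i-1}<x<v_i,\ h_{j-1}<y<h_j\}$ the points of $\pi$ are absent if $M_{ij}=0$, increasing if $M_{ij}=1$, decreasing if $M_{ij}=-1$; the result is an $M$-gridded permutation. The row-column graph $G_M$ is the bipartite graph on $\{1,\dots,m\}\cup\{1',\dots,n'\}$ with edge $ij'$ iff $M_{ij}\neq0$; $M$ is unicyclic if $G_M$ has exactly one cycle. A labelled embedding of a labelled gridded permutation $\sigma^\#$ into $\pi^\#$ is a subsequence of $\pi$ order-isomorphic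 to $\sigma$ mapping each point of $\sigma^\#$ to a point in the cell with the same index and with the same label (labels form an antichain). $M$ is a partial multiplication matrix: there are fixed $c_1,\dots,c_m,r_1,\dots,r_n\in\{\pm1\}$ with $M_{ij}=c_ir_j$ for each non-zero entry. Column $i$ is oriented left-to-right if $c_i=1$, right-to-left otherwise; row $j$ bottom-to-top if $r_j=1$, top-to-bottom otherwise. The orientation digraph of an $M$-gridded permutation has its points as vertices with $x\to y$ whenever $x,y$ lie in a common column of cells and $x$ precedes $y$ in that column's orientation, or in a common row of cells and $x$ precedes $y$ in that row's orientation. Let $\ell$ be the length of the cycle of $G_M$. A gridded $M$-coil is an $M$-gridded permutation of length $n>\ell$ with an ordering $v_1,\dots,v_n$ of its points and a labelling by $1,\dots,\ell$ of the cells corresponding to the edges of the cycle such that (C1) $v_i$ lies in cell $i\bmod\ell$ (residues in $\{1,\dots,\ell\}$); (C2) $v_{i-1}\to v_i$ for $1<i\le n$; (C3) $v_i\to v_{i-\ell-1}$ for $\ell+1<i\le n$; (C4) $v_{\ell+1}\to v_1$. *)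

(* Defs.v *)
From mathcomp Require Import all_boot all_order all_algebra all_fingroup.
Set Implicit Arguments. Unset Strict Implicit. Unset Printing Implicit Defensive.
Import GRing.Theory Num.Theory.
Local Open Scope ring_scope.

(* Conventions (0-indexed): an m x n gridding matrix has m columns and n rows;
   M i j (i : 'I_m, j : 'I_n) is the entry in column i and row j (both counted
   from the left/bottom starting at 0). *)

Definition gridding_matrix (m n : nat) (M : 'M[int]_(m, n)) : Prop :=
  forall i j, M i j = 0 \/ M i j = 1 \/ M i j = -1.

Definition sign (x : int) : Prop := x = 1 \/ x = -1.

Definition partial_mult (m n : nat) (M : 'M[int]_(m, n))
  (c : 'I_m -> int) (r : 'I_n -> int) : Prop :=
  gridding_matrix M /\ (forall i, sign (c i)) /\ (forall j, sign (r j)) /\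
  (forall i j, M i j != 0 -> M i j = c i * r j).

(** Row-column graph G_M: vertices are columns (inl i) and rows (inr j). *)
Definition rc_adj (m n : nat) (M : 'M[int]_(m, n)) : rel ('I_m + 'I_n) :=
  fun a b => match a, b with
             | inl i, inr j => M i j != 0
             | inr j, inl i => M i j != 0
             | _, _ => false
             end.

Definition cell_edge (m n : nat) (e : 'I_m * 'I_n) (a b : 'I_m + 'I_n) : bool :=
  ((a == inl e.1) && (b == inr e.2)) || ((a == inr e.2) && (b == inl e.1)).

Definition cycle_cells (m n : nat) (M : 'M[int]_(m, n))
  (S : {set 'I_m * 'I_n}) : Prop :=
  exists w : seq ('I_m + 'I_n),
    [/\ uniq w, 3 <= size w, path.cycle (rc_adj M) w &
        S = [set e | [exists x, (x \in w) && cell_edge e x (next w x)]]]%N.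

Definition unicyclic (m n : nat) (M : 'M[int]_(m, n)) : Prop :=
  exists S, cycle_cells M S /\ forall S', cycle_cells M S' -> S' = S.

(** A permutation of length L is p : {perm 'I_L};
   its points are (x, p x) for x : 'I_L (0-indexed coordinates).
   A vertical line v_k = t + 1/2 (1-indexed coordinates) is encoded by the
   integer t = gv k, so v_0 = 1/2 and v_m = L + 1/2 become gv 0 = 0 and
   gv m = L; point x lies strictly between v_i and v_{i+1} iff
   gv i <= x < gv (i+1).  Same for horizontal lines gh. *)
Record gperm := GPerm {
  glen : nat;
  gp : {perm 'I_glen};
  gv : nat -> nat;
  gh : nat -> nat }.

Definition in_col (g : gperm) (i : nat) (x : 'I_(glen g)) : bool :=
  (gv g i <= x < gv g i.+1)%N.
Definition in_row (g : gperm) (j : nat) (x : 'I_(glen g)) : bool :=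
  (gh g j <= gp g x < gh g j.+1)%N.
Arguments in_col : clear implicits.
Arguments in_row : clear implicits.
Definition in_cell (g : gperm) (i j : nat) (x : 'I_(glen g)) : bool :=
  in_col g i x && in_row g j x.
Arguments in_cell : clear implicits.

Definition is_M_gridded (m n : nat) (M : 'M[int]_(m, n)) (g : gperm) : Prop :=
  [/\ gv g 0 = 0%N /\ gv g m = glen g, gh g 0 = 0%N /\ gh g n = glen g,
      (forall k, (k < m)%N -> (gv g k <= gv g k.+1)%N),
      (forall k, (k < n)%N -> (gh g k <= gh g k.+1)%N) &
      forall (i : 'I_m) (j : 'I_n),
        [/\ (M i j = 0 -> forall x, ~~ in_cell g i j x),
            (M i j = 1 -> forall x y, in_cell g i j x -> in_cell g i j y ->
                           (x < y)%N -> (gp g x < gp g y)%N) &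
            (M i j = -1 -> forall x y, in_cell g i j x -> in_cell g i j y ->
                           (x < y)%N -> (gp g y < gp g x)%N)]].

Definition oriented (m n : nat) (c : 'I_m -> int) (r : 'I_n -> int)
  (g : gperm) (x y : 'I_(glen g)) : Prop :=
  (exists i : 'I_m, [/\ in_col g i x, in_col g i y &
        if c i == 1 then (x < y)%N else (y < x)%N]) \/
  (exists j : 'I_n, [/\ in_row g j x, in_row g j y &
        if r j == 1 then (gp g x < gp g y)%N else (gp g y < gp g x)%N]).

(** S is the set of cells of the unique cycle of G_M, so
   ell = #|S|.  The ordering v_1, ..., v_N of the points is given by the
   bijection s (v_{k+1} = s k), and the labelling of the cycle cells by
   1..ell by the bijection lab : 'I_ell -> S (label k+1 is lab k). *)
Definition is_coil (m n : nat) (M : 'M[int]_(m, n)) (c : 'I_m -> int)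
  (r : 'I_n -> int) (S : {set 'I_m * 'I_n}) (g : gperm)
  (s : {perm 'I_(glen g)}) (lab : 'I_#|S| -> 'I_m * 'I_n) : Prop :=
  [/\ is_M_gridded M g,
      (#|S| < glen g)%N,
      injective lab & (forall e, e \in S <-> exists k, lab k = e)] /\
  [/\
      (forall k : 'I_(glen g), forall k' : 'I_#|S|, (k %% #|S| = k')%N ->
          in_cell g (lab k').1 (lab k').2 (s k)),
      (forall (k k1 : 'I_(glen g)), k1 = k.+1 :> nat -> oriented c r (s k) (s k1)),
      (forall (k k1 : 'I_(glen g)), (#|S| < k)%N -> k1 = (k - #|S|.+1)%N :> nat ->
          oriented c r (s k) (s k1)) &
      (forall (k k1 : 'I_(glen g)), k = #|S| :> nat -> k1 = 0%N :> nat ->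
          oriented c r (s k) (s k1))].

Arguments is_coil {m n} M c r S g s lab.

(** Labels: true = hollow (circle), false = bullet.  In a coil with ordering s,
   the first and last points are circles, the others bullets. *)
Definition coil_label (g : gperm) (s : {perm 'I_(glen g)}) (x : 'I_(glen g)) : bool :=
  (nat_of_ord (s^-1 x)%g == 0%N) || (nat_of_ord (s^-1 x)%g == (glen g).-1).

Definition labelled_embedding (m n : nat) (h g : gperm) (lh : 'I_(glen h) -> bool)
  (lg : 'I_(glen g) -> bool) (f : 'I_(glen h) -> 'I_(glen g)) : Prop :=
  [/\ (forall a b : 'I_(glen h), (a < b)%N -> (f a < f b)%N),
      (forall a b : 'I_(glen h), (gp h a < gp h b)%N = (gp g (f a) < gp g (f b))%N),
      (forall (a : 'I_(glen h)) (i : 'I_m) (j : 'I_n), in_cell h i j a -> in_cell g i j (f a)) &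
      (forall a, lh a = lg (f a))].

Arguments labelled_embedding m n {h g} lh lg f.

(* Main.v *)
Require Import Defs.
From mathcomp Require Import all_boot all_order all_algebra all_fingroup.
From mathcomp Require Import zify.
Local Open Scope ring_scope.
Set Implicit Arguments. Unset Strict Implicit.

Section Grid.
Variables (m n : nat) (M : 'M[int]_(m,n)) (c : 'I_m -> int) (r : 'I_n -> int) (g : gperm).
Hypothesis HM : partial_mult M c r.
Hypothesis Hg : is_M_gridded M g.

Definition on_line (L : 'I_m + 'I_n) (x : 'I_(glen g)) : bool :=
  match L with inl i => in_col g i x | inr j => in_row g j x end.
Definition ord_line (L : 'I_m + 'I_n) (x y : 'I_(glen g)) : bool :=
  match L with
  | inl i => if c i == 1 then (x < y)%N else (y < x)%N
  | inr j => if r j == 1 then (gp g x < gp g y)%N else (gp g y < gp g x)%N end.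

Lemma orientedE x y : oriented c r x y <->
  exists L, [/\ on_line L x, on_line L y & ord_line L x y].
Proof.
split.
- case=> [[i [h1 h2 h3]]|[j [h1 h2 h3]]]; [exists (inl i) | exists (inr j)]; by split.
- case=> [[i|j] [h1 h2 h3]]; [left; exists i | right; exists j]; by split.
Qed.

Lemma gv_mono k k' : (k <= k')%N -> (k' <= m)%N -> (gv g k <= gv g k')%N.
Proof.
case: Hg => _ _ Hv _ _.
elim: k' => [|k' IH] hk hk'.
- by rewrite leqn0 in hk; move/eqP: hk => ->.
- rewrite leq_eqVlt in hk; case/orP: hk => [/eqP -> //|hk].
  exact: leq_trans (IH hk (ltnW hk')) (Hv _ hk').
Qed.

Lemma gh_mono k k' : (k <= k')%N -> (k' <= n)%N -> (gh g k <= gh g k')%N.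
Proof.
case: Hg => _ _ _ Hv _.
elim: k' => [|k' IH] hk hk'.
- by rewrite leqn0 in hk; move/eqP: hk => ->.
- rewrite leq_eqVlt in hk; case/orP: hk => [/eqP -> //|hk].
  exact: leq_trans (IH hk (ltnW hk')) (Hv _ hk').
Qed.

Lemma col_uniq (i i' : 'I_m) x : in_col g i x -> in_col g i' x -> i = i'.
Proof.
rewrite /in_col => /andP [a1 a2] /andP [b1 b2].
apply: val_inj => /=.
case: (ltngtP i i') => // h.
- have := @gv_mono i.+1 i' h (ltnW (ltn_ord i')); lia.
- have := @gv_mono i'.+1 i h (ltnW (ltn_ord i)); lia.
Qed.

Lemma row_uniq (j j' : 'I_n) x : in_row g j x -> in_row g j' x -> j = j'.
Proof.
rewrite /in_row => /andP [a1 a2] /andP [b1 b2].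
apply: val_inj => /=.
case: (ltngtP j j') => // h.
- have := @gh_mono j.+1 j' h (ltnW (ltn_ord j')); lia.
- have := @gh_mono j'.+1 j h (ltnW (ltn_ord j)); lia.
Qed.

Lemma cell_cons (i : 'I_m) (j : 'I_n) x y : in_cell g i j x -> in_cell g i j y ->
  ord_line (inl i) x y = ord_line (inr j) x y.
Proof.
move=> hx hy.
case: Hg => _ _ _ _ /(_ i j) [H0 H1 Hm1].
case: HM => grid [hc [hr hmul]].
have pinj : forall a b, gp g a = gp g b -> a = b by move=> a b; apply: perm_inj.
have n1 : ((-1 : int) == 1) = false by [].
case: (grid i j) => [e|[e|e]].
- by move: (H0 e x); rewrite hx.
- have := hmul i j; rewrite e => /(_ isT) he; rewrite /=.
  case: (hc i) => ce; case: (hr j) => re; rewrite ce re in he *;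
    try by move: he.
  all: rewrite ?eqxx ?n1.
  + case: (ltngtP x y) => h.
    * by rewrite (H1 e x y hx hy h).
    * by have := H1 e y x hy hx h; lia.
    * by have e' : x = y := val_inj h; subst; rewrite ltnn.
  + case: (ltngtP x y) => h.
    * by have := H1 e x y hx hy h; lia.
    * by rewrite (H1 e y x hy hx h).
    * by have e' : x = y := val_inj h; subst; rewrite ltnn.
- have := hmul i j; rewrite e => /(_ isT) he; rewrite /=.
  case: (hc i) => ce; case: (hr j) => re; rewrite ce re in he *;
    try by move: he.
  all: rewrite ?eqxx ?n1.
  + case: (ltngtP x y) => h.
    * by rewrite (Hm1 e x y hx hy h).
    * by have := Hm1 e y x hy hx h; lia.
    * by have e' : x = y := val_inj h; subst; rewrite ltnn.
  + case: (ltngtP x y) => h.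
    * by have := Hm1 e x y hx hy h; lia.
    * by rewrite (Hm1 e y x hy hx h).
    * by have e' : x = y := val_inj h; subst; rewrite ltnn.
Qed.

Lemma oriented_line x y L : oriented c r x y -> on_line L x -> on_line L y ->
  ord_line L x y.
Proof.
case/orientedE => L' [h1 h2 h3] hx hy.
case: L hx hy => [i|j] hx hy; case: L' h1 h2 h3 => [i'|j'] h1 h2 h3.
- by rewrite (col_uniq hx h1).
- have cx : in_cell g i j' x by apply/andP.
  have cy : in_cell g i j' y by apply/andP.
  by rewrite (cell_cons cx cy).
- have cx : in_cell g i' j x by apply/andP.
  have cy : in_cell g i' j y by apply/andP.
  by rewrite -(cell_cons cx cy).
- by rewrite (row_uniq hx h1).
Qed.

Lemma ord_line_irr L x : ord_line L x x = false.
Proof. by case: L => [i|j] /=; case: ifP; rewrite ltnn. Qed.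

Lemma ord_line_asym L x y : ord_line L x y -> ord_line L y x -> False.
Proof. by case: L => [i|j] /=; case: ifP => _; lia. Qed.

Lemma ord_line_trans L x y z : ord_line L x y -> ord_line L y z -> ord_line L x z.
Proof. by case: L => [i|j] /=; case: ifP => _; lia. Qed.

Lemma oriented_irr (x : 'I_(glen g)) : ~ oriented c r x x.
Proof. by case/orientedE => L [_ _]; rewrite ord_line_irr. Qed.

Lemma oriented_asym (x y : 'I_(glen g)) : oriented c r x y -> oriented c r y x -> False.
Proof.
move=> hxy hyx; case/orientedE: hxy => L [h1 h2 h3].
exact: ord_line_asym h3 (oriented_line hyx h2 h1).
Qed.

Lemma oriented_trans L (x y z : 'I_(glen g)) : on_line L x -> on_line L y -> on_line L z ->
  oriented c r x y -> oriented c r y z -> oriented c r x z.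
Proof.
move=> hx hy hz hxy hyz; apply/orientedE; exists L; split => //.
exact: ord_line_trans (oriented_line hxy hx hy) (oriented_line hyz hy hz).
Qed.

Lemma cell_line (i : 'I_m) (j : 'I_n) L x : in_cell g i j x -> on_line L x ->
  L = inl i \/ L = inr j.
Proof.
case/andP => hc hr; case: L => [i'|j'] /= h.
- by left; rewrite (col_uniq h hc).
- by right; rewrite (row_uniq h hr).
Qed.

Lemma cell_same_line (i : 'I_m) (j : 'I_n) L x y : in_cell g i j x -> in_cell g i j y ->
  on_line L x -> on_line L y.
Proof.
move=> hx hy hl; case: (cell_line hx hl) => ->; by case/andP: hy.
Qed.

End Grid.

Definition incident (m n : nat) (L : 'I_m + 'I_n) (e : 'I_m * 'I_n) : bool :=
  (L == inl e.1) || (L == inr e.2).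
Definition other (m n : nat) (L : 'I_m + 'I_n) (e : 'I_m * 'I_n) : 'I_m + 'I_n :=
  if L is inl _ then inr e.2 else inl e.1.

Lemma other_inj m n L (e1 e2 : 'I_m * 'I_n) : incident L e1 -> incident L e2 ->
  other L e1 = other L e2 -> e1 = e2.
Proof.
case: e1 => a1 b1; case: e2 => a2 b2.
case: L => [i|j]; rewrite /incident /= ?orbF => /eqP h1 /eqP h2 [h3].
- by rewrite h3; congr pair; apply: (@inl_inj _ 'I_n); rewrite -h1 -h2.
- by rewrite h3; congr pair; apply: (@inr_inj 'I_m); rewrite -h1 -h2.
Qed.

Lemma cycle_other m n (S : {set 'I_m * 'I_n}) (w : seq ('I_m + 'I_n)) : uniq w ->
  S = [set e | [exists x, (x \in w) && cell_edge e x (next w x)]] ->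
  forall L e, e \in S -> incident L e -> other L e = next w L \/ other L e = prev w L.
Proof.
move=> Uw -> L [a b]; rewrite inE => /existsP [x /andP [_ hx]].
rewrite /incident /cell_edge /= in hx *.
case/orP: hx => /andP [/eqP e1 /eqP e2]; case/orP => /eqP eL; subst.
- by left; rewrite /= e2.
- by right; rewrite /= -e2 prev_next.
- by right; rewrite /= -e2 prev_next.
- by left; rewrite /= e2.
Qed.

Lemma cycle_deg m n (M : 'M[int]_(m,n)) (S : {set 'I_m * 'I_n}) : cycle_cells M S ->
  forall L e1 e2 e3, e1 \in S -> e2 \in S -> e3 \in S ->
  incident L e1 -> incident L e2 -> incident L e3 ->
  e1 = e2 \/ e1 = e3 \/ e2 = e3.
Proof.
case=> w [Uw _ _ HS] L e1 e2 e3 s1 s2 s3 i1 i2 i3.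
have o1 := cycle_other Uw HS s1 i1.
have o2 := cycle_other Uw HS s2 i2.
have o3 := cycle_other Uw HS s3 i3.
case: o1 => o1; case: o2 => o2; case: o3 => o3.
all: first [ left; apply: other_inj i1 i2 _; congruence
           | right; left; apply: other_inj i1 i3 _; congruence
           | right; right; apply: other_inj i2 i3 _; congruence ].
Qed.
Local Open Scope nat_scope.

Lemma modeq_le (l x y : nat) : (0 < l)%N -> (x < y)%N -> x %% l = y %% l -> (x + l <= y)%N.
Proof.
move=> hl hxy hm.
have : (y == x %[mod l]) by rewrite hm.
rewrite eqn_mod_dvd; last by lia.
move/(dvdn_leq); rewrite subn_gt0 => /(_ hxy); lia.
Qed.

Lemma modeq_S (l x y : nat) : x %% l = y %% l -> x.+1 %% l = y.+1 %% l.
Proof. by move=> h; rewrite -addn1 -modnDml h modnDml addn1. Qed.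

Lemma modeq_addl (l x : nat) : (x + l) %% l = x %% l.
Proof. exact: modnDr. Qed.

Lemma mod_neq1 (l x : nat) : (1 < l)%N -> x %% l <> x.+1 %% l.
Proof.
move=> hl h.
have : (x + 0 == x + 1 %[mod l]) by rewrite addn0 addn1 h.
rewrite eqn_modDl mod0n modn_small //.
Qed.

Lemma mod_neq2 (l x : nat) : (2 < l)%N -> x %% l <> x.+2 %% l.
Proof.
move=> hl h.
have : (x + 0 == x + 2 %[mod l]) by rewrite addn0 addn2 h.
rewrite eqn_modDl mod0n modn_small //.
Qed.

Ltac clear_mod := repeat match goal with H : context [_ %% _] |- _ => clear H end.
Ltac mlia := clear_mod; lia.

Section Coil.
Variables (m n : nat) (M : 'M[int]_(m,n)) (c : 'I_m -> int) (r : 'I_n -> int)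
  (S : {set 'I_m * 'I_n}) (g : gperm) (s : {perm 'I_(glen g)})
  (lab : 'I_#|S| -> 'I_m * 'I_n).
Hypothesis HM : partial_mult M c r.
Hypothesis Hc : is_coil M c r S g s lab.
Hypothesis Hcyc : cycle_cells M S.
Variable x0 : 'I_(glen g).
Local Notation N := (glen g).
Local Notation l := #|S|.
Definition P (k : nat) := s (insubd x0 k).
Local Notation "x --> y" := (oriented c r x y) (at level 70).

Lemma HgM : is_M_gridded M g.
Proof. by case: Hc => [[]]. Qed.

Lemma lN : (l < N)%N.
Proof. by case: Hc => [[]]. Qed.

Lemma valP' k : (k < N)%N -> val (insubd x0 k) = k.
Proof. by move=> h; rewrite val_insubd h. Qed.

Lemma C2' k : (k.+1 < N)%N -> P k --> P k.+1.
Proof.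
case: Hc => _ [_ C2 _ _] h; apply: C2.
by rewrite !valP' // ltnW.
Qed.

Lemma C3' k : (l < k)%N -> (k < N)%N -> P k --> P (k - l.+1).
Proof.
case: Hc => _ [_ _ C3 _] h1 h2; apply: C3; rewrite ?valP' //; try lia.
all: rewrite ?valP' //; lia.
Qed.

Lemma C4' : P l --> P 0.
Proof.
case: Hc => _ [_ _ _ C4]; apply: C4; rewrite valP' //; first exact: lN.
by apply: leq_ltn_trans lN.
Qed.

Lemma l_pos : (1 < N)%N -> (0 < l)%N.
Proof.
move=> hN; case: (posnP l) => // h0.
have h1 := C3' (k := 1); rewrite h0 in h1.
have := h1 isT hN; rewrite subnn => h10.
have h01 := C2' (k := 0) hN.
by case: (oriented_asym HM HgM h01 h10).
Qed.

Lemma P_idx (x : 'I_N) : P (val (s^-1 x)%g) = x.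
Proof. by rewrite /P valKd permKV. Qed.

Section Pos.
Hypothesis Hl : (0 < l)%N.

Definition cellof (k : nat) : 'I_m * 'I_n := lab (Ordinal (ltn_pmod k Hl)).

Lemma C1' k : (k < N)%N -> in_cell g (cellof k).1 (cellof k).2 (P k).
Proof.
case: Hc => _ [C1 _ _ _] h; apply: C1.
by rewrite valP'.
Qed.

Lemma cellof_inj k k' : cellof k = cellof k' -> k %% l = k' %% l.
Proof.
case: Hc => [[_ _ linj _] _] /linj.
by move/(congr1 val).
Qed.

Lemma cellof_eq k k' : k %% l = k' %% l -> cellof k = cellof k'.
Proof.
move=> h; rewrite /cellof; congr lab; exact: val_inj.
Qed.

Lemma cellof_in k : cellof k \in S.
Proof. case: Hc => [[_ _ _ hS] _]; apply/hS; by eexists. Qed.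

Lemma same_line (L : 'I_m + 'I_n) k k' : (k < N)%N -> (k' < N)%N -> k %% l = k' %% l ->
  on_line L (P k) -> on_line L (P k').
Proof.
move=> hk hk' hm; apply: (cell_same_line HgM (C1' hk)).
rewrite (cellof_eq hm); exact: C1' hk'.
Qed.

Lemma line_inc (L : 'I_m + 'I_n) k : (k < N)%N -> on_line L (P k) -> incident L (cellof k).
Proof.
move=> hk hL; case: (cell_line HgM (C1' hk) hL) => ->; by rewrite /incident eqxx ?orbT.
Qed.

Lemma same_back b : forall a, (a < b)%N -> (b < N)%N -> a %% l = b %% l -> P b --> P a.
Proof.
elim/ltn_ind: b => b IH a hab hb hmod.
have hle : (a + l <= b)%N := modeq_le Hl hab hmod.
case: (ltngtP l b) => hlb.
- set d := b - l.+1.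
  have h1 : P b --> P d := C3' hlb hb.
  have h2 : P d --> P d.+1 by apply: C2'; rewrite /d; lia.
  have hdb : d.+1 %% l = b %% l.
    by rewrite -(modeq_addl l d.+1); congr modn; rewrite /d; lia.
  case/orientedE: (h1) => L [hL1 hL2 _].
  have hL3 : on_line L (P d.+1).
    by apply: (same_line (k := b)) => //; rewrite /d; lia.
  have h12 : P b --> P d.+1 := oriented_trans HM HgM hL1 hL2 hL3 h1 h2.
  case: (eqVneq a d.+1) => [-> // | hne].
  have hdN : (d.+1 < N)%N by rewrite /d; lia.
  have h3 : P d.+1 --> P a.
    apply: IH; rewrite /d; try lia.
    by rewrite hmod hdb.
  pose L' : 'I_m + 'I_n := inl (cellof b).1.
  have o1 : on_line L' (P b) by case/andP: (C1' hb).
  have o2 : on_line L' (P d.+1) by apply: (same_line (k := b)).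
  have o3 : on_line L' (P a) by apply: (same_line (k := b)) => //; lia.
  exact (oriented_trans HM HgM o1 o2 o3 h12 h3).
- lia.
- have -> : a = 0 by lia.
  rewrite -hlb; exact: C4'.
Qed.

Lemma tr_back : P l.-1 --> P 0.
Proof.
have h1 : P l.-1 --> P l.-1.+1 by apply: C2'; rewrite prednK //; exact: lN.
rewrite prednK // in h1.
case/orientedE: (h1) => L [hL1 hL2 _].
have hL3 : on_line L (P 0).
  apply: (same_line (k := l)) => //; first exact: lN.
  - exact: leq_ltn_trans lN.
  - by rewrite modnn mod0n.
exact (oriented_trans HM HgM hL1 hL2 hL3 h1 (C4')).
Qed.


Lemma key a b : (a < b)%N -> (b < N)%N -> b != a.+1 -> ~ (P a --> P b).
Proof.
move=> hab hbN hne hab'.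
have asym := oriented_asym HM HgM.
have [e1|n1] := eqVneq (a %% l) (b %% l).
  exact: asym _ _ hab' (same_back hab hbN e1).
set p := b.-1.
have hpb : p.+1 = b by rewrite /p; mlia.
have hap : (a < p)%N by rewrite /p; mlia.
have [e2|n2] := eqVneq (a %% l) (p %% l).
  have hle := modeq_le Hl hap e2.
  set d := b - l.+1.
  have h1 : P b --> P d by apply: C3' => //; rewrite /p in hle; mlia.
  have eda : d %% l = a %% l.
    by rewrite e2 -(modeq_addl l d); congr modn; rewrite /d /p in hle *; mlia.
  case: (eqVneq a d) => [ed|nd].
    by rewrite -ed in h1; apply: asym _ _ hab' h1.
  have hdN : (d < N)%N by rewrite /d; mlia.
  have h2 : P d --> P a.
    apply: same_back => //; rewrite ?eda //; rewrite /d /p in hle *; mlia.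
  case/orientedE: (h1) => L [hL1 hL2 _].
  have hL3 : on_line L (P a) by apply: (same_line (k := d)) => //; mlia.
  exact: asym _ _ hab' (oriented_trans HM HgM hL1 hL2 hL3 h1 h2).
have [e3|n3] := eqVneq (a %% l) (b.+1 %% l).
  case: (leqP l b) => hlb.
    set d := b - l.
    have edb : d %% l = b %% l.
      by rewrite -(modeq_addl l d); congr modn; rewrite /d; mlia.
    have hdb : P b --> P d.
      by apply: same_back => //; rewrite /d; mlia.
    have h2 : P d --> P d.+1 by apply: C2'; rewrite /d; mlia.
    have e4 : d.+1 %% l = b.+1 %% l := modeq_S edb.
    have hle : (a + l <= b.+1)%N by apply: modeq_le Hl _ e3; mlia.
    have hdN : (d.+1 < N)%N by rewrite /d; mlia.
    case/orientedE: (h2) => L [hL1 hL2 _].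
    have hL3 : on_line L (P b) by apply: (same_line (k := d)) => //; mlia.
    have hL4 : on_line L (P a).
      by apply: (same_line (k := d.+1)) => //; [mlia | rewrite e4 e3].
    have h12 : P b --> P d.+1 := oriented_trans HM HgM hL3 hL1 hL2 hdb h2.
    case: (eqVneq a d.+1) => [ed|nd].
      by rewrite -ed in h12; apply: asym _ _ hab' h12.
    have h3 : P d.+1 --> P a.
      apply: same_back => //; rewrite ?e4 ?e3 //; rewrite /d in hle nd *; mlia.
    exact: asym _ _ hab' (oriented_trans HM HgM hL3 hL2 hL4 h12 h3).
  have ha : a %% l = a by apply: modn_small; mlia.
  case: (ltngtP b.+1 l) => hb1.
  - by move: e3; rewrite ha modn_small //; mlia.
  - mlia.
  - move: e3; rewrite ha -hb1 modnn => ea; subst a.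
    have := tr_back; rewrite -hb1 /= => hb0.
    exact: asym _ _ hab' hb0.
have l1 : l != 1%N.
  by apply/eqP => el; move: n1; rewrite el !modn1.
have npb : p %% l != b %% l.
  by apply/eqP; rewrite -hpb; apply: mod_neq1; mlia.
have l2 : l != 2%N.
  apply/eqP => el; move: n1 n2 npb; rewrite el.
  have := ltn_pmod a (isT : (0 < 2)%N).
  have := ltn_pmod b (isT : (0 < 2)%N).
  have := ltn_pmod p (isT : (0 < 2)%N).
  move=> x1 x2 x3 /eqP y1 /eqP y2 /eqP y3; lia.
have l3 : (2 < l)%N by mlia.
have l1' : (1 < l)%N by mlia.
have hpN : (p < N)%N by mlia.
have haN : (a < N)%N by mlia.
case/orientedE: hab' => L [hLa hLb _].
have h0 : P p --> P b by rewrite -hpb; apply: C2'; mlia.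
case/orientedE: h0 => L0 [hL0p hL0b _].
set k := b %% l.
have hk : (k < l)%N by apply: ltn_pmod.
have hkN : (k < N)%N by have := lN; mlia.
have hk1N : (k.+1 < N)%N by have := lN; mlia.
have h1 : P k --> P k.+1 by apply: C2'.
case/orientedE: h1 => L1 [hL1k hL1k1 _].
have ekb : cellof k = cellof b by apply: cellof_eq; rewrite modn_mod.
have cL := cell_line HgM (C1' hbN) hLb.
have cL0 := cell_line HgM (C1' hbN) hL0b.
have cL1 := cell_line HgM (C1' hkN) hL1k; rewrite ekb in cL1.
have iLa := line_inc haN hLa.
have iLb := line_inc hbN hLb.
have iL0p := line_inc hpN hL0p.
have iL0b := line_inc hbN hL0b.
have iL1b := line_inc hkN hL1k; rewrite ekb in iL1b.
have iL1k1 := line_inc hk1N hL1k1.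
have ek1 : k.+1 %% l = b.+1 %% l by apply: modeq_S; rewrite modn_mod.
have deg := cycle_deg Hcyc.
have cin := cellof_in.
have : L = L0 \/ L = L1 \/ L0 = L1.
  by case: cL => ->; case: cL0 => ->; case: cL1 => ->; tauto.
case=> [eL|[eL|eL]]; [subst L | subst L | subst L0].
- case: (deg _ _ _ _ (cin a) (cin p) (cin b) iLa iL0p iL0b) =>
    [/cellof_inj|[/cellof_inj|/cellof_inj]] => e.
  + by rewrite e eqxx in n2.
  + by rewrite e eqxx in n1.
  + by rewrite e eqxx in npb.
- case: (deg _ _ _ _ (cin a) (cin b) (cin k.+1) iLa iLb iL1k1) =>
    [/cellof_inj|[/cellof_inj|/cellof_inj]] => e.
  + by rewrite e eqxx in n1.
  + by rewrite e ek1 eqxx in n3.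
  + by move: e; rewrite ek1; exact: (@mod_neq1 l b l1').
- case: (deg _ _ _ _ (cin p) (cin b) (cin k.+1) iL0p iL0b iL1k1) =>
    [/cellof_inj|[/cellof_inj|/cellof_inj]] => e.
  + by rewrite e eqxx in npb.
  + by move: e; rewrite ek1 -hpb; exact: (@mod_neq2 l p l3).
  + by move: e; rewrite ek1; exact: (@mod_neq1 l b l1').
Qed.

Lemma key' a b : (a < N)%N -> (b < N)%N -> P a --> P b -> (b < a)%N \/ b = a.+1.
Proof.
move=> ha hb h.
case: (ltngtP a b) => hab.
- case: (eqVneq b a.+1) => [->|hne]; first by right.
  by case: (key hab hb hne h).
- by left.
- subst; case: (oriented_irr h).
Qed.

Lemma pt_cell (x : 'I_N) : exists e : 'I_m * 'I_n, in_cell g e.1 e.2 x.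
Proof.
exists (cellof (val (s^-1 x)%g)).
have := C1' (k := val (s^-1 x)%g) (ltn_ord _); by rewrite P_idx.
Qed.

End Pos.
End Coil.

Local Open Scope ring_scope.
Unset Implicit Arguments.

Theorem lemma4p11 (m n : nat) (M : 'M[int]_(m, n))
  (c : 'I_m -> int) (r : 'I_n -> int) (S : {set 'I_m * 'I_n}) :
  partial_mult M c r ->
  cycle_cells M S -> (forall S', cycle_cells M S' -> S' = S) ->
  forall (pi : gperm) (spi : {perm 'I_(glen pi)}) (labpi : 'I_#|S| -> 'I_m * 'I_n)
         (sg : gperm) (ssg : {perm 'I_(glen sg)}) (labsg : 'I_#|S| -> 'I_m * 'I_n),
  is_coil M c r S pi spi labpi ->
  is_coil M c r S sg ssg labsg ->
  (glen sg < glen pi)%N ->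
  ~ exists f : 'I_(glen sg) -> 'I_(glen pi),
      labelled_embedding m n (coil_label ssg) (coil_label spi) f.
Proof.
move=> HM Hcyc _ pi spi labpi sg ssg labsg Hpi Hsg hlt [f [fmono fgp fcell flab]].
have hK : (#|S| < glen sg)%N by case: Hsg => [[]].
have N0 : (0 < glen pi)%N by lia.
have K0 : (0 < glen sg)%N by lia.
pose x0 := Ordinal N0.
pose y0 := Ordinal K0.
have Hl : (0 < #|S|)%N by apply: (l_pos HM Hpi x0); lia.
have HgP := HgM Hpi.
have HgS := HgM Hsg.
have finj : injective f.
  move=> a b e; apply: val_inj; case: (ltngtP a b) => // h.
  - by have := fmono _ _ h; rewrite e ltnn.
  - by have := fmono _ _ h; rewrite e ltnn.
have online : forall (L : 'I_m + 'I_n) x, on_line L x -> on_line L (f x).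
  move=> L x hL; case: (pt_cell Hsg y0 Hl x) => e he.
  have hf := fcell _ _ _ he.
  case: (cell_line HgS he hL) => ->; by case/andP: hf.
have ftr : forall x y, oriented c r x y -> oriented c r (f x) (f y).
  move=> x y /orientedE [L [hx hy ho]]; apply/orientedE; exists L; split.
  - exact: online.
  - exact: online.
  - case: L hx hy ho => [i|j] hx hy /=.
    + by case: ifP => _ h; apply: fmono.
    + by rewrite -!fgp.
set P' := P spi x0.
set Q := P ssg y0.
have idxP : forall x, P' (val (spi^-1 x)%g) = x by move=> x; exact: P_idx.
have idxP' : forall x, P' (nat_of_ord (spi^-1 x)%g) = x by move=> x; exact: P_idx.
have QK : forall k, (k < glen sg)%N -> val (ssg^-1 (Q k))%g = k.
  by move=> k hk; rewrite /Q /P permK valP'.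
have labQ : forall k, (k < glen sg)%N ->
    coil_label ssg (Q k) = (k == 0%N) || (k == (glen sg).-1).
  by move=> k hk; rewrite /coil_label QK.
have Qinj : forall a b, (a < glen sg)%N -> (b < glen sg)%N -> f (Q a) = f (Q b) -> a = b.
  by move=> a b ha hb /finj e; rewrite -(QK a ha) -(QK b hb) e.
have lab0 := flab (Q 0); rewrite labQ // eqxx /coil_label in lab0.
case/orP: (esym lab0) => /eqP h0.
-
  have claim : forall i, (i < glen sg)%N -> forall j, (j <= i)%N ->
      val (spi^-1 (f (Q j)))%g = j.
    elim=> [|i IH] hi j hj.
      by move: hj; rewrite leqn0 => /eqP ->.
    rewrite leq_eqVlt in hj; case/orP: hj => [/eqP ->|hj]; last first.
      by apply: IH => //; lia.
    set t := val (spi^-1 (f (Q i.+1)))%g.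
    have hQ : oriented c r (Q i) (Q i.+1) := C2' Hsg y0 hi.
    have hP := ftr _ _ hQ.
    rewrite -(idxP (f (Q i))) -(idxP (f (Q i.+1))) IH // -/t in hP; last by lia.
    have hiN : (i < glen pi)%N by lia.
    case: (key' HM Hpi Hcyc Hl hiN (ltn_ord _) hP) => ht //.
    have e := IH (ltnW hi) t (ltnW ht).
    have : f (Q t) = f (Q i.+1) by rewrite -{1}(idxP (f (Q t))) e /t idxP.
    have htK : (t < glen sg)%N by exact: ltn_trans ht (ltnW hi).
    exact: (Qinj _ _ htK hi).
  have hK1 : ((glen sg).-1 < glen sg)%N by lia.
  have e2 : nat_of_ord (spi^-1 (f (Q (glen sg).-1)))%g = (glen sg).-1 :=
    claim (glen sg).-1 hK1 (glen sg).-1 (leqnn _).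
  have := flab (Q (glen sg).-1); rewrite labQ; last by lia.
  rewrite eqxx orbT /coil_label => /esym /orP [] /eqP e1; lia.
-
  have h1 := ftr _ _ (tr_back HM Hsg y0 Hl).
  have h2 := ftr _ _ (C4' Hsg y0).
  rewrite -(idxP' (f (Q 0))) h0 in h1 h2.
  rewrite -(idxP' (f (Q #|S|.-1))) in h1.
  rewrite -(idxP' (f (Q #|S|))) in h2.
  have hNN : ((glen pi).-1 < glen pi)%N by lia.
  case: (key' HM Hpi Hcyc Hl (ltn_ord _) hNN h1) => e1.
    by have := ltn_ord (spi^-1 (f (Q #|S|.-1)))%g; lia.
  case: (key' HM Hpi Hcyc Hl (ltn_ord _) hNN h2) => e2.
    by have := ltn_ord (spi^-1 (f (Q #|S|)))%g; lia.
  have : f (Q #|S|.-1) = f (Q #|S|).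
    rewrite -(idxP' (f (Q #|S|.-1))) -(idxP' (f (Q #|S|))).
    congr P'; lia.
  have hl1 : (#|S|.-1 < glen sg)%N by lia.
  move/(Qinj _ _ hl1 hK); lia.
Qed.
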